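(* Let $1\le m\le D$. For each $\mathbf a\in\{0,1\}^N$ define the function $f_{\mathbf a}:\Sigma_m\to\mathbb R$ by $$f_{\mathbf a}(S)=\frac{n_S(Z_{\mathbf a}=+1)-n_S(Z_{\mathbf a}=-1)}{m},$$ where $n_S(Z_{\mathbf a}=\pm1)$ is the number of $\mathbf z\in S$ with $(-1)^{\mathbf a\cdot\mathbf z}=\pm1$. Then $f_{\mathbf a}$ is an eigenfunction of the transition matrix of the local automaton Markov chain on $\Sigma_m$ with eigenvalue $1-\frac{|\mathbf a|}{2N}$, i.e. $$\frac{1}{|\mathcal G|}\sum_{u\in\mathcal G}f_{\mathbf a}(u(S))=\Big(1-\frac{|\mathbf a|}{2N}\Big)f_{\mathbf a}(S)\quad\text{for all }S\in\Sigma_m,$$ where $|\mathbf a|$ is the Hamming weight of $\mathbf a$.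
   Context: Consider $N\ge3$ qubits on a ring (site indices modulo $N$), bitstrings $\mathbf z\in\{0,1\}^N$, $D=2^N$, and $\mathbf a\cdot\mathbf z=\sum_i a_iz_i$. The gate set is $\mathcal G=\{u_{iab}: i\in\{1,\dots,N\},\ a,b\in\{0,1\}\}$ ($|\mathcal G|=4N$), where $u_{iab}$ is the permutation of $\{0,1\}^N$ that flips bit $i$ if and only if bit $i-1$ equals $a$ and bit $i+1$ equals $b$. $\Sigma_m$ is the set of subsets of $\{0,1\}^N$ of cardinality $m$, with $u(S)=\{u(\mathbf z):\mathbf z\in S\}$; the induced Markov chain has transition matrix $\Gamma_{S,S'}=\frac{1}{|\mathcal G|}\sum_{u\in\mathcal G}\delta_{S',u(S)}$, and $(\Gamma f)(S)=\sum_{S'}\Gamma_{S,S'}f(S')$. *)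

(* Defs.v *)
From HB Require Import structures.
From mathcomp Require Import all_boot all_order all_algebra.
Set Implicit Arguments. Unset Strict Implicit. Unset Printing Implicit Defensive.
Import Order.TTheory GRing.Theory Num.Theory.
Local Open Scope ring_scope.

(* Bitstrings z in {0,1}^N on a ring of N sites 'I_N (indices mod N). *)
Definition bitstring (N : nat) := {ffun 'I_N -> bool}.

Definition gate (N : nat) (i : 'I_N) (a b : bool) (z : bitstring N) : bitstring N :=
  if (z (ord_pred i) == a) && (z (ordS i) == b)
  then [ffun j => if j == i then ~~ z j else z j]
  else z.

Definition gate_set_image (N : nat) (i : 'I_N) (a b : bool)
  (S : {set bitstring N}) : {set bitstring N} := gate i a b @: S.

Definition dotb (N : nat) (a z : bitstring N) : nat := (\sum_(i < N) (a i && z i))%N.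

Definition hweight (N : nat) (a : bitstring N) : nat := (\sum_(i < N) (a i : nat))%N.

Definition nplus (N : nat) (a : bitstring N) (S : {set bitstring N}) : nat :=
  #|[set z in S | ~~ odd (dotb a z)]|.
Definition nminus (N : nat) (a : bitstring N) (S : {set bitstring N}) : nat :=
  #|[set z in S | odd (dotb a z)]|.

Definition f_a (R : realFieldType) (N m : nat) (a : bitstring N)
  (S : {set bitstring N}) : R :=
  ((nplus a S)%:R - (nminus a S)%:R) / m%:R.

(* (Gamma f)(S) = 1/|G| sum_{u in G} f(u(S)), G = {u_{iab}}, |G| = 4N *)
Definition Gamma (R : realFieldType) (N : nat)
  (f : {set bitstring N} -> R) (S : {set bitstring N}) : R :=
  (4 * N)%N%:R^-1 * \sum_(i < N) \sum_(a : bool) \sum_(b : bool)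
      f (gate_set_image i a b S).

(* Main.v *)
Require Import Defs.
From HB Require Import structures.
From mathcomp Require Import all_boot all_order all_algebra.
From mathcomp Require Import zify ring.
Import Order.TTheory GRing.Theory Num.Theory.
Local Open Scope ring_scope.

Section Aux.
Variable (R : realFieldType) (N : nat).
Implicit Types (a z : bitstring N) (i : 'I_N).

Definition flip i z : bitstring N := [ffun j => if j == i then ~~ z j else z j].

Lemma ordS_neq i : (1 < N)%N -> ordS i != i.
Proof.
move=> HN; apply/eqP => /(congr1 val) /=.
have := ltn_ord i; case: (ltnP i.+1 N) => H1 H2.
  by rewrite modn_small //; lia.
have -> : i.+1 = N by lia.
by rewrite modnn; lia.
Qed.

Lemma ord_pred_neq i : (1 < N)%N -> ord_pred i != i.
Proof.
move=> HN; apply/eqP => E.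
by have := ordS_neq (ord_pred i) HN; rewrite ord_predK E eqxx.
Qed.

Lemma gate_inv i (x y : bool) z : (1 < N)%N -> gate i x y (gate i x y z) = z.
Proof.
move=> HN; rewrite /gate.
case C: ((z (ord_pred i) == x) && (z (ordS i) == y)); last by rewrite C.
rewrite !ffunE (negbTE (ord_pred_neq i HN)) (negbTE (ordS_neq i HN)) C.
by apply/ffunP => j; rewrite !ffunE; case: eqP => // ->; rewrite negbK.
Qed.

Definition sg a z : R := (-1) ^+ dotb a z.

Lemma sgE a z : sg a z = \prod_(j < N) (-1) ^+ (a j && z j).
Proof. by rewrite /sg /dotb prodrXr. Qed.

Lemma sg_flip a z i : sg a (flip i z) = (-1) ^+ (a i) * sg a z.
Proof.
rewrite !sgE (bigD1 i) //= [in RHS](bigD1 i) //= mulrA; congr (_ * _).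
  rewrite /flip ffunE eqxx; case: (a i); case: (z i) => //=; by rewrite ?mulN1r ?opprK ?expr1 ?expr0 ?mulr1.
apply: eq_bigr => j /negbTE Hj; by rewrite /flip ffunE Hj.
Qed.

Lemma diffE a (S : {set bitstring N}) :
  (nplus a S)%:R - (nminus a S)%:R = \sum_(z in S) sg a z.
Proof.
rewrite (bigID (fun z => odd (dotb a z))) /= addrC.
have E1 : \sum_(z in S | ~~ odd (dotb a z)) sg a z = (nplus a S)%:R.
  rewrite /nplus -sumr_const.
  rewrite [RHS](eq_bigl (fun z => (z \in S) && ~~ odd (dotb a z))); last by move=> z; rewrite inE.
  by apply: eq_bigr => z /andP [_ H]; rewrite /sg -signr_odd (negbTE H).
have E2 : \sum_(z in S | odd (dotb a z)) sg a z = - (nminus a S)%:R.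
  rewrite /nminus -sumr_const -sumrN.
  rewrite [RHS](eq_bigl (fun z => (z \in S) && odd (dotb a z))); last by move=> z; rewrite inE.
  by apply: eq_bigr => z /andP [_ H]; rewrite /sg -signr_odd H expr1.
by rewrite E1 E2.
Qed.

Lemma local_sum a z i :
  \sum_(x : bool) \sum_(y : bool) sg a (gate i x y z)
  = (3%:R + (-1) ^+ (a i)) * sg a z.
Proof.
have gE : forall x y, gate i x y z = if (z (ord_pred i) == x) && (z (ordS i) == y) then flip i z else z by [].
rewrite !big_bool /= !gE.
case: (z (ord_pred i)); case: (z (ordS i)) => /=;
  rewrite ?sg_flip; ring.
Qed.

End Aux.

Theorem mainTheorem13 (R : realFieldType) (N m : nat) (a : bitstring N) :
  (3 <= N)%N -> (1 <= m <= 2 ^ N)%N ->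
  forall S : {set bitstring N}, #|S| = m ->
    Gamma (@f_a R N m a) S
    = (1 - (hweight a)%:R / (2 * N)%:R) * f_a R m a S.
Proof.
move=> HN Hm S HS.
have HN1 : (1 < N)%N by lia.
rewrite /Gamma /f_a.
have E : forall i x y, (nplus a (gate_set_image i x y S))%:R
     - (nminus a (gate_set_image i x y S))%:R
   = \sum_(z in S) @sg R N a (gate i x y z).
  move=> i x y; rewrite diffE /gate_set_image big_imset //.
  by move=> z1 z2 _ _ H; rewrite -(@gate_inv N i x y z1 HN1) H gate_inv.
under eq_bigr => i _ do under eq_bigr => x _ do under eq_bigr => y _ do rewrite E.
rewrite diffE.
under eq_bigr => i _ do under eq_bigr => x _ do rewrite -mulr_suml.
under eq_bigr => i _ do rewrite -mulr_suml.
rewrite -mulr_suml.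
under eq_bigr => i _ do under eq_bigr => x _ do rewrite exchange_big /=.
under eq_bigr => i _ do rewrite exchange_big /=.
rewrite exchange_big /=.
under eq_bigr => z _ do under eq_bigr => i _ do rewrite local_sum.
under eq_bigr => z _ do rewrite -mulr_suml /=.
rewrite -mulr_sumr /=.
have H3 : \sum_(i < N) (3%:R + (-1) ^+ a i : R) = 4%:R * N%:R - 2%:R * (hweight a)%:R.
  rewrite /hweight natr_sum mulr_sumr.
  have -> : (4%:R * N%:R : R) = \sum_(i < N) 4%:R by rewrite sumr_const card_ord mulr_natr.
  rewrite -sumrB.
  by apply: eq_bigr => i _; case: (a i); rewrite /= ?expr1 ?expr0; ring.
rewrite H3 !natrM.
have HN0 : (N%:R : R) != 0 by rewrite pnatr_eq0; lia.
have Hm0 : (m%:R : R) != 0 by rewrite pnatr_eq0; lia.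
field.
by rewrite HN0 Hm0.
Qed.
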